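(* Under Algorithm 2(a) below, let $Q(t)$ be the size of the sender's queue after the arrivals in slot $t$ have been appended (end of Step 3). Then $$Q(t)=\dim V(t)-\dim V_\Delta(t),$$ where $V(t)=\mathbb{F}_q^{A(t)}$ with $A(t)$ the total number of arrivals up to and including slot $t$, and $V_\Delta(t)=\bigcap_{j=1}^nV_j(t)$ with $V_j(t)$ the knowledge space of receiver $j$ at the end of Step 3 of slot $t$.
   Context: Model: a sender broadcasts to $n$ receivers over a slotted packet erasure broadcast channel; packets are vectors over $\mathbb{F}_q$, indexed by arrival order; each slot some packets may arrive at the sender (just after the slot begins); the sender transmits at most one linear combination of its stored packets per slot; each receiver either receives it or suffers an erasure, and the sender learns via perfect feedback before the end of the slot which receivers received it. The knowledge space of a node is the space of global coefficient vectors (with respect to all original packets arrived so far) of linear combinations it can compute. Algorithm 2(a) (field size $q>n$): The sender stores queue contents $\mathbf{y}_1,\dots,\mathbf{y}_Q$ and matrices $B,B_1,\dots,B_n$ with $Q$ columns whose rows are local coefficient vectors (with respect to the current queue contents); initially all empty. In every slot: (Step 3) if $a$ packets arrive, append them to the queue, set $B=I_Q$ for the new $Q$, append $a$ zero columns to each $B_j$. (Step 4) If the queue is nonempty, choose $\mathbf{g}\in\mathrm{span}(B)$ with $\mathbf{g}\notin\mathrm{span}(B_j)$ for every $j$ with $\mathrm{span}(B_j)\neq\mathrm{span}(B)$ (row spaces), transmit $\sum_i g_i\mathbf{y}_i$; else $\mathbf{g}=\mathbf{0}$, transmit nothing. (Step 5) If $\mathbf{g}\ne\mathbf{0}$ and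 receiver $j$ received it, append $\mathbf{g}$ as a row of $B_j$. (Step 6) $B_\Delta$: a basis of $\bigcap_j\mathrm{span}(B_j)$; $B'$: completion of $B_\Delta$ to a basis of $\mathrm{span}(B)$, $B''=B'\setminus B_\Delta$; $B_j'$: completion of $B_\Delta$ to a basis of $\mathrm{span}(B_j)$ with $B_j'':=B_j'\setminus B_\Delta\subseteq\mathrm{span}(B'')$. (Step 7) Replace the queue by $\sum_i h_i\mathbf{y}_i$, $\mathbf{h}\in B''$. (Step 8) Replace $B_j$ by $X_j$ where $B_j''=X_jB''$; set $B=I_{|B''|}$. *)

(* Defs.v *)
From HB Require Import structures.
From mathcomp Require Import all_boot all_order all_algebra all_field.
Set Implicit Arguments. Unset Strict Implicit. Unset Printing Implicit Defensive.
Import GRing.Theory.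
Local Open Scope ring_scope.

(* Global coefficient vectors live in 'rV[F]_N, where N is any bound on the
   total number of packets that have arrived in the slots considered
   (vectors of F^{A(t)} are embedded by zero-padding; packet i (0-based,
   arrival order) has global coefficient vector evec i). *)

Definition evec (F : fieldType) (N i : nat) : 'rV[F]_N :=
  \row_(l < N) ((l : nat) == i)%:R.

Definition Vspace (F : fieldType) (N a : nat) : {vspace 'rV[F]_N} :=
  <<[seq evec F N i | i <- iota 0 a]>>%VS.

Definition Acum (arr : nat -> nat) (t : nat) : nat :=
  (\sum_(1 <= s < t.+1) arr s)%N.

Definition idrows (F : fieldType) (Q : nat) : seq 'rV[F]_Q :=
  [seq row i (1%:M : 'M[F]_Q) | i <- enum 'I_Q].

Definition rowsmx (F : fieldType) (Q : nat) (s : seq 'rV[F]_Q) : 'M[F]_(size s, Q) :=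
  \matrix_(k < size s, l < Q) (nth 0 s k) 0 l.

(* Joint state of the system:
   sQ   = queue size Q,
   sC   = global coefficient vectors (rows) of the queue contents y_1..y_Q,
   sB j = rows of the sender's matrix B_j (local coefficient vectors),
   sR j = global coefficient vectors of the packets received by receiver j
          (its knowledge space is their span). *)
Record state (F : fieldType) (n N : nat) := mkState {
  sQ : nat;
  sC : 'M[F]_(sQ, N);
  sB : 'I_n -> seq 'rV[F]_sQ;
  sR : 'I_n -> seq 'rV[F]_N }.

Definition init_state (F : fieldType) (n N : nat) : state F n N :=
  @mkState F n N 0 0 (fun _ => [::]) (fun _ => [::]).

(* Step 3: a packets arrive; the previous total number of arrivals is off.
   The new packets (global coefficient vectors evec (off+k)) are appended to
   the queue, and a zero columns are appended to each B_j.  (B := I_Q is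
   not stored: it is reset to I_Q here and used in Steps 4 and 6.) *)
Definition arrive (F : fieldType) (n N : nat) (off a : nat) (s : state F n N)
  : state F n N :=
  @mkState F n N (sQ s + a)
    (col_mx (sC s) (\matrix_(k < a, l < N) ((l : nat) == off + k)%:R))
    (fun j => [seq row_mx x (0 : 'rV[F]_a) | x <- sB s j])
    (sR s).

(* Steps 4-8 of a slot, with erasure pattern rec (rec j = receiver j
   received the transmission), starting from the state s at the end of
   Step 3 and ending with the state s' at the end of Step 8.  All choices of
   the algorithm (g, B_Delta, B', B_j') are existentially chosen. *)
Definition step48 (F : fieldType) (n N : nat) (rec : 'I_n -> bool)
  (s s' : state F n N) : Prop :=
  let Q := sQ s in
  let B := idrows F Q in
  exists g : 'rV[F]_Q,
    (if (0 < Q)%N then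
       g \in <<B>>%VS /\
       (forall j, (<<sB s j>> != <<B>>)%VS -> g \notin <<sB s j>>%VS)
     else g = 0) /\
    let B5 := fun j => if (g != 0) && rec j then rcons (sB s j) g else sB s j in
    let R5 := fun j => if (0 < Q)%N && rec j
                       then rcons (sR s j) (g *m sC s) else sR s j in
    exists (BD B2 : seq 'rV[F]_Q) (Bj2 : 'I_n -> seq 'rV[F]_Q),
      basis_of (\bigcap_(j < n) <<B5 j>>)%VS BD /\
      basis_of <<B>>%VS (BD ++ B2) /\
      (forall j, basis_of <<B5 j>>%VS (BD ++ Bj2 j) /\
                 all (fun v => v \in <<B2>>%VS) (Bj2 j)) /\
      exists X : 'I_n -> seq 'rV[F]_(size B2),
        (forall j, [seq x *m rowsmx B2 | x <- X j] = Bj2 j) /\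
        s' = @mkState F n N (size B2) (rowsmx B2 *m sC s) X R5.

(* Main.v *)
Set Warnings "-all".
Require Import Defs.
From HB Require Import structures.
From mathcomp Require Import all_boot all_order all_algebra all_field.
From mathcomp Require Import zify.
Import GRing.Theory.
Local Open Scope ring_scope.

Lemma Vsupp (F : fieldType) N a (v : 'rV[F]_N) (l : 'I_N) :
  v \in Vspace F N a -> (a <= l)%N -> v 0 l = 0.
Proof.
move=> vV al.
have := coord_span (X := in_tuple [seq evec F N i | i <- iota 0 a]) vV.
move=> ->; rewrite summxE big1 // => i _.
have ia : (i < a)%N := leq_trans (ltn_ord i) (eq_leq (etrans (size_map _ _) (size_iota _ _))).
rewrite mxE /= (nth_map 0%N) ?size_iota //=.
rewrite nth_iota //= /evec mxE add0n.
have -> : ((l : nat) == i) = false by apply/negbTE; rewrite neq_ltn (leq_trans ia al) orbT.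
by rewrite mulr0.
Qed.

Lemma Vsplit (F : fieldType) N a k :
  Vspace F N (a + k)%N = (Vspace F N a + <<[seq evec F N i | i <- iota a k]>>)%VS.
Proof. by rewrite /Vspace iotaD map_cat span_cat add0n. Qed.

Definition Emx (F : fieldType) N a k : 'M[F]_(k, N) := \matrix_(i < k, l < N) ((l : nat) == (a + i)%N)%:R.

Lemma Erow (F : fieldType) N a k (i : 'I_k) : row i (Emx F N a k) = evec F N (a + i)%N.
Proof. by apply/rowP => l; rewrite !mxE. Qed.

Lemma Ekill (F : fieldType) N a k (y : 'rV[F]_k) :
  (a + k <= N)%N -> y *m Emx F N a k \in Vspace F N a -> y = 0.
Proof.
move=> akN yV; apply/rowP => i.
have aiN : (a + i < N)%N by apply: leq_trans akN; rewrite ltn_add2l.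
have := @Vsupp _ _ _ _ (Ordinal aiN) yV (leq_addr _ _).
rewrite !mxE (bigD1 i) //= mxE eqxx mulr1 big1 ?addr0 // => j ji.
rewrite mxE eqn_add2l.
have -> : ((i : nat) == j) = false by apply/negbTE; rewrite eq_sym.
by rewrite mulr0.
Qed.

Definition fC (F : fieldType) Q N (C : 'M[F]_(Q,N)) : 'Hom('rV[F]_Q, 'rV[F]_N) :=
  linfun (mulmxr C).
Arguments fC {F Q N}.

Lemma fCE (F : fieldType) Q N (C : 'M[F]_(Q,N)) x : fC C x = x *m C.
Proof. by rewrite lfunE. Qed.

Lemma idrows_full (F : fieldType) Q : <<idrows F Q>>%VS = fullv.
Proof.
apply/eqP; rewrite eqEsubv subvf /=; apply/subvP => v _.
rewrite (row_sum_delta v); apply: memv_suml => i _; apply: memvZ; apply: memv_span.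
rewrite -row1; apply: map_f; exact: mem_enum.
Qed.

Lemma fCrow (F : fieldType) Q k N (C : 'M[F]_(Q,N)) (E : 'M[F]_(k,N)) x y :
  fC (col_mx C E) (row_mx x y) = x *m C + y *m E.
Proof. by rewrite fCE mul_row_col. Qed.

Lemma arrive_inv (F : fieldType) n Q k a N (C : 'M[F]_(Q,N))
  (Bs : 'I_n -> seq 'rV[F]_Q) (Rs : 'I_n -> seq 'rV[F]_N) W :
  (a + k <= N)%N -> lker (fC C) == 0%VS ->
  (W + fC C @: fullv)%VS = Vspace F N a -> (W :&: fC C @: fullv)%VS = 0%VS ->
  (forall j, <<Rs j>>%VS = (W + fC C @: <<Bs j>>)%VS) ->
  [/\ lker (fC (col_mx C (Emx F N a k))) == 0%VS,
      (W + fC (col_mx C (Emx F N a k)) @: fullv)%VS = Vspace F N (a + k)%N,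
      (W :&: fC (col_mx C (Emx F N a k)) @: fullv)%VS = 0%VS &
      forall j, <<Rs j>>%VS = (W + fC (col_mx C (Emx F N a k)) @:
                     <<[seq row_mx x (0 : 'rV[F]_k) | x <- Bs j]>>)%VS].
Proof.
move=> akN kf eU dW eR.
set E := Emx F N a k.
have WU : (W <= Vspace F N a)%VS by rewrite -eU addvSl.
have imU : forall x, x *m C \in Vspace F N a.
  by move=> x; rewrite -eU -fCE; apply/(subvP (addvSr _ _)); apply: memv_img; apply: memvf.
split.
- rewrite -subv0; apply/subvP => z; rewrite memv_ker memv0.
  rewrite -(hsubmxK z) fCrow => /eqP h.
  have y0 : rsubmx z = 0.
    apply: (@Ekill F N a k _ akN); have -> : rsubmx z *m Emx F N a k = - (lsubmx z *m C).
      by apply/eqP; rewrite -addr_eq0 addrC h.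
    by rewrite memvN.
  move: h; rewrite y0 mul0mx addr0 -fCE => /eqP; rewrite -memv_ker (eqP kf) memv0 => /eqP ->.
  by rewrite row_mx0.
- apply/eqP; rewrite eqEsubv; apply/andP; split.
    apply/subvP => v /memv_addP[w wW [u /memv_imgP[z _ ->] ->]].
    rewrite -(hsubmxK z) fCrow addrA Vsplit; apply: memv_add.
      by apply: memvD => //; apply: (subvP WU).
    rewrite mulmx_sum_row; apply: memv_suml => i _; apply: memvZ; apply: memv_span.
    by rewrite Erow; apply: map_f; rewrite mem_iota leq_addr ltn_add2l ltn_ord.
  rewrite Vsplit subv_add; apply/andP; split.

    rewrite -eU; apply: addvS => //; apply/subvP => v /memv_imgP[x _ ->].
    have -> : fC C x = fC (col_mx C E) (row_mx x 0) by rewrite fCrow mul0mx addr0 fCE.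
    by apply: memv_img; apply: memvf.
  apply/span_subvP => u /mapP[i]; rewrite mem_iota => /andP[ai iak] ->.
  have rk : (i - a < k)%N by rewrite ltn_subLR.
  have -> : evec F N i = fC (col_mx C E) (row_mx 0 (row (Ordinal rk) 1%:M)).
    by rewrite fCrow mul0mx add0r -row_mul mul1mx Erow /= subnKC.
  by apply/(subvP (addvSr _ _)); apply: memv_img; apply: memvf.
- apply/eqP; rewrite -subv0; apply/subvP => v; rewrite memv_cap => /andP[vW /memv_imgP[z _ vz]].
  move: vz; rewrite -(hsubmxK z) fCrow => vz.
  have y0 : rsubmx z = 0.
    apply: (@Ekill F N a k _ akN); have -> : rsubmx z *m Emx F N a k = v - lsubmx z *m C.
      by rewrite vz addrC addKr.
    by apply: memvB => //; apply: (subvP WU).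
  rewrite -dW memv_cap vW vz y0 mul0mx addr0 -fCE memv_img //; exact: memvf.
- move=> j; rewrite eR !limg_span -map_comp; congr (W + <<_>>)%VS.
  by apply: eq_map => x /=; rewrite fCrow mul0mx addr0 fCE.
Qed.

Lemma vline0' (F : fieldType) (vT : vectType F) : (<[0 : vT]> = 0)%VS.
Proof. by apply/eqP; rewrite -subv0 -memvE memv0. Qed.

Lemma free_cap (F : fieldType) (vT : vectType F) (X Y : seq vT) :
  free (X ++ Y) -> (<<X>> :&: <<Y>>)%VS = 0%VS.
Proof.
move=> /eqP fXY; apply/eqP; rewrite -dimv_eq0.
have := dimv_sum_cap <<X>> <<Y>>; rewrite -span_cat fXY size_cat.
have := dim_span X; have := dim_span Y.
move=> h1 h2 h3; apply/eqP; move: h1 h2 h3; lia.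
Qed.

Lemma rowsmx_row (F : fieldType) Q (s : seq 'rV[F]_Q) (i : 'I_(size s)) :
  row i (rowsmx s) = nth 0 s i.
Proof. by apply/rowP => l; rewrite !mxE. Qed.

Lemma free_rowsmx (F : fieldType) Q (s : seq 'rV[F]_Q) (x : 'rV[F]_(size s)) :
  free s -> x *m rowsmx s = 0 -> x = 0.
Proof.
move=> fs h; apply/rowP => i; rewrite mxE.
have /freeP fs' : free (in_tuple s) by [].
apply: (fs' (fun i => x 0 i)); transitivity (x *m rowsmx s); last exact: h.
rewrite mulmx_sum_row.
by apply: eq_bigr => j _; rewrite rowsmx_row.
Qed.

Lemma idrowsM (F : fieldType) Q (s : seq 'rV[F]_Q) :
  [seq v *m rowsmx s | v <- idrows F (size s)] = s.
Proof.
rewrite /idrows -map_comp.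
have -> : [seq ((fun v => v *m rowsmx s) \o (fun i => row i 1%:M)) i | i <- enum 'I_(size s)]
   = [seq nth 0 s i | i <- map val (enum 'I_(size s))].
  rewrite -map_comp; apply: eq_map => i /=; by rewrite -row_mul mul1mx rowsmx_row.
by rewrite val_enum_ord -/(mkseq _ _) mkseq_nth.
Qed.

Lemma capL (F : fieldType) (uT vT : vectType F) (f : 'Hom(uT, vT)) (W : {vspace vT}) n
   (S : 'I_n -> {vspace uT}) :
  (0 < n)%N -> lker f == 0%VS -> (W :&: f @: fullv)%VS = 0%VS ->
  (\bigcap_(j < n) (W + f @: S j))%VS = (W + f @: (\bigcap_(j < n) S j))%VS.
Proof.
move=> n0 kf dWf; apply/eqP; rewrite eqEsubv; apply/andP; split; last first.
  apply/subv_bigcapP => j _; apply: addvS => //; apply: limgS.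
  exact: (bigcapv_inf j).
apply/subvP => v vI.
have vj : forall j, v \in (W + f @: S j)%VS.
  move=> j; move/subvP: (@bigcapv_inf _ _ _ j xpredT (fun j => (W + f @: S j)%VS) (W + f @: S j)%VS isT (subvv _)).
  by apply.
have /memv_addP[w0 w0W [u0 /memv_imgP[s0 s0S ->] e0]] := vj (Ordinal n0).
rewrite e0.
apply: memv_add => //; apply: memv_img.
rewrite memvE; apply/subv_bigcapP => j _; rewrite -memvE.
have /memv_addP[wj wjW [uj /memv_imgP[sj sjS ->] e]] := vj j.
have : f (sj - s0) \in (W :&: f @: fullv)%VS.
  rewrite memv_cap memv_img ?memvf // andbT linearB /=.
  have -> : f sj = w0 + f s0 - wj by rewrite -e0 e (addrC wj) addrK.
  rewrite (addrAC w0) addrK.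
  by rewrite memvB.
rewrite dWf memv0 linearB /= subr_eq0 => /eqP fe.
by rewrite -((lker0P kf) _ _ fe).
Qed.

Definition Inv (F : fieldType) n N a (s : state F n N) : Prop :=
  exists W : {vspace 'rV[F]_N},
  [/\ lker (fC (sC s)) == 0%VS,
      (W + fC (sC s) @: fullv)%VS = Vspace F N a,
      (W :&: fC (sC s) @: fullv)%VS = 0%VS,
      forall j, <<sR s j>>%VS = (W + fC (sC s) @: <<sB s j>>)%VS &
      (\bigcap_(j < n) <<sR s j>>)%VS = W].
Arguments Inv {F n N}.

Lemma step48_inv (F : fieldType) n N a (rec : 'I_n -> bool) (s s' : state F n N) :
  (0 < n)%N -> Inv a s -> step48 rec s s' -> Inv a s'.
Proof.
move=> n0; case: s => Q C Bs Rs [W /= [kf eU dW eR _]].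
move=> [g [gcond H]]; move: H => /=.
move=> [BD [B2 [Bj2 [hBD [hB [hBj [X [hX ->]]]]]]]] /=.
set f := fC C.
set B5 := fun j => if (g != 0) && rec j then rcons (Bs j) g else Bs j.
set R5 := fun j => if (0 < Q)%N && rec j then rcons (Rs j) (g *m C) else Rs j.
have fullB : <<BD ++ B2>>%VS = fullv by rewrite (span_basis hB) idrows_full.
have freeB : free (BD ++ B2) by case/andP: hB.
have R5e : forall j, <<R5 j>>%VS = (W + f @: <<B5 j>>)%VS.
  move=> j; rewrite /R5 /B5; case: (rec j); rewrite ?andbF ?andbT ?eR //.
  case: (posnP Q) => [Q0|Qp] /=.
    have -> : g = 0.
      by apply/rowP => -[i ilt]; exfalso; move: ilt => /=; rewrite Q0.
    by rewrite eqxx eR.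
  rewrite -cats1 span_cat span_seq1 eR -addvA; congr (W + _)%VS.
  case: eqP => [->|gn] /=; first by rewrite mul0mx vline0' addv0.
  by rewrite -cats1 span_cat span_seq1 limgD limg_line fCE.
set W' := (W + f @: <<BD>>)%VS.
set M := rowsmx B2.
have f'E : forall x, fC (M *m C) x = f (x *m M) by move=> x; rewrite !fCE mulmxA.
have im' : (fC (M *m C) @: fullv = f @: <<B2>>)%VS.
  rewrite -idrows_full !limg_span -[in RHS](@idrowsM _ _ B2) -[in RHS]map_comp.
  by congr (<< _ >>)%VS; apply: eq_map => x /=; rewrite f'E.
have B5e : forall j, <<B5 j>>%VS = <<BD ++ Bj2 j>>%VS.
  by move=> j; rewrite (span_basis (proj1 (hBj j))).
exists W'; split => /=.
- apply/lker0P => x1 x2; rewrite !f'E => /(lker0P kf) /eqP.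
  rewrite -subr_eq0 -mulmxBl => /eqP /(@free_rowsmx _ _ _ _ (catr_free freeB)) /eqP.
  by rewrite subr_eq0 => /eqP.
- by rewrite im' /W' -addvA -limgD -span_cat fullB.
- rewrite im'; apply/eqP; rewrite -subv0; apply/subvP => v.
  rewrite memv_cap => /andP[/memv_addP[w wW [u /memv_imgP[d dD ->] ->]] /memv_imgP[b bB e]].
  have fw : w = f (b - d) by rewrite linearB /= -e addrK.
  have w0 : w = 0.
    by apply/eqP; rewrite -memv0 -dW memv_cap wW fw memv_img ?memvf.
  move: fw; rewrite w0 => /esym /eqP; rewrite -memv_ker (eqP kf) memv0 subr_eq0 => /eqP bd.
  have : b \in (<<BD>> :&: <<B2>>)%VS by rewrite memv_cap {1}bd dD bB.
  rewrite (@free_cap _ _ _ _ freeB) memv0 => /eqP b0.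
  by rewrite add0r -bd b0 linear0 memv0.
- move=> j; rewrite R5e B5e span_cat limgD /W' -addvA; congr (W + (_ + _))%VS.
  by rewrite !limg_span -(hX j) -map_comp; congr (<< _ >>)%VS; apply: eq_map => x /=; rewrite f'E.
- rewrite (eq_bigr _ (fun j _ => R5e j)) capL //.
  by rewrite /W' (span_basis hBD).
Qed.

Lemma inv_final (F : fieldType) n N a (s : state F n N) :
  Inv a s -> sQ s = (\dim (Vspace F N a) - \dim (\bigcap_(j < n) <<sR s j>>))%N.
Proof.
case: s => Q C Bs Rs [W /= [kf eU dW _ eI]].
rewrite eI -eU dimv_disjoint_sum // limg_dim_eq ?(eqP kf) ?capv0 //.
by rewrite dimvf dim_matrix addKn ?mul1n ?mul1r.
Qed.

Lemma rV0_vs (F : fieldType) (U : {vspace 'rV[F]_0}) : U = 0%VS.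
Proof.
by apply/eqP; rewrite -subv0; apply/subvP => x _; rewrite memv0 (thinmx0 x).
Qed.

Lemma init_inv (F : fieldType) n N : (0 < n)%N -> Inv 0%N (init_state F n N).
Proof.
move=> n0; exists 0%VS; split => /=.
- by rewrite (@rV0_vs _ (lker _)).
- by rewrite [fullv](@rV0_vs _ fullv) limg0 addv0 /Vspace /= span_nil.
- by rewrite cap0v.
- by move=> j; rewrite !span_nil limg0 addv0.
- rewrite span_nil; case: n n0 => // n' _.
  by rewrite big_ord_recr /= capv0.
Qed.

Lemma arrive_inv' (F : fieldType) n N a k (s : state F n N) :
  (a + k <= N)%N -> Inv a s -> Inv (a + k)%N (arrive a k s).
Proof.
move=> akN; case: s => Q C Bs Rs [W /= [kf eU dW eR eI]].
have [h1 h2 h3 h4] := @arrive_inv F n Q k a N C Bs Rs W akN kf eU dW eR.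
by exists W; split.
Qed.

Lemma AcumS arr s : Acum arr s.+1 = (Acum arr s + arr s.+1)%N.
Proof. by rewrite /Acum big_nat_recr. Qed.

Lemma Acum_mono arr s t : (s <= t)%N -> (Acum arr s <= Acum arr t)%N.
Proof.
move=> st; rewrite /Acum (@big_cat_nat _ _ _ s.+1 1 t.+1) //= ?leq_addr //.
Qed.

Theorem theorem4 (F : finFieldType) (n : nat) (arr : nat -> nat)
  (rec : nat -> 'I_n -> bool) (N t : nat) (pre mid : nat -> state F n N) :
  (0 < n)%N -> (n < #|F|)%N -> (1 <= t)%N -> (Acum arr t <= N)%N ->
  pre 1%N = init_state F n N ->
  (forall s, (1 <= s <= t)%N -> mid s = arrive (Acum arr s.-1) (arr s) (pre s)) ->
  (forall s, (1 <= s < t)%N -> step48 (rec s) (mid s) (pre s.+1)) ->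
  sQ (mid t) =
    (\dim (Vspace F N (Acum arr t)) - \dim (\bigcap_(j < n) <<sR (mid t) j>>))%N.
Proof.
move=> n0 _ t1 AtN Hpre Hmid Hstep.
have midI : forall s, (1 <= s <= t)%N -> Inv (Acum arr s.-1) (pre s) ->
    Inv (Acum arr s) (mid s).
  move=> [|s] // /andP[_ st] I; rewrite Hmid ?st //= AcumS.
  apply: arrive_inv' => //; rewrite -AcumS.
  exact: leq_trans (@Acum_mono arr _ _ st) AtN.
have key : forall s, (1 <= s <= t)%N -> Inv (Acum arr s.-1) (pre s).
  elim => [|s IH] // /andP[s1 st].
  case: s IH s1 st => [|s] IH _ st.
    by rewrite Hpre /= /Acum big_geq //; apply: init_inv.
  apply: (@step48_inv _ _ _ _ _ _ _ n0 _ (Hstep s.+1 _)); last by rewrite /= st.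
  apply: (midI s.+1); first by rewrite /= ltnW.
  by apply: IH; rewrite /= ltnW.
apply: inv_final; apply: midI; first by rewrite t1 leqnn.
by apply: key; rewrite t1 leqnn.
Qed.
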